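(* Let $\mathcal{N}^g=\{n: T(n)\in\mathcal{G}\}$ be the target set. Then LevinTS run with policy $\pi$ satisfies $$N(\mathrm{LevinTS},\mathcal{N}^g)\le \min_{n\in\mathcal{N}^g}\frac{\ell(n)}{\pi(n)},$$ where $N(\mathrm{LevinTS},\mathcal{N}^g)$ is the number of node selections made by LevinTS up to and including the first selected node belonging to $\mathcal{N}^g$.
   Context: Setting: a finite action set $\mathcal{A}$, a set of states $\mathcal{S}$ with initial state $s_0$, a deterministic transition function $T:\mathcal{S}\times\mathcal{A}\to\mathcal{S}$, and a set of goal states $\mathcal{G}\subseteq\mathcal{S}$. Nodes are finite sequences of actions; the root $n_0$ is the empty sequence; $T(n)$ is the state reached from $s_0$ by applying the actions of $n$ in order; the children of $n$ are $na$, $a\in\mathcal{A}$. For a node $n$ consisting of $t$ actions, $\ell(n):=t+1$. A policy is a function $\pi$ from nodes to $[0,1]$ with $\pi(n_0)=1$ and $\pi(n)=\sum_{a\in\mathcal{A}}\pi(na)$; $\pi(a\mid n)=\pi(na)/\pi(n)$; $\ell(n)/\pi(n)=+\infty$ if $\pi(n)=0$. The policy is Markovian if $\pi(a\mid n_1)=\pi(a\mid n_2)$ whenever $T(n_1)=T(n_2)$. LevinTS: maintain a frontier $\mathcal{F}$, initially $\{n_0\}$, and a record set $\mathcal{V}$, initially $\emptyset$. While $\mathcal{F}\neq\emptyset$: remove from $\mathcal{F}$ a node $n$ minimizing $\ell(n)/\pi(n)$ (this counts as one node selection/expansion); if $T(n)\in\mathcal{G}$, stop with success; if $\pi$ is Markovian,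 then if there is $n'\in\mathcal{V}$ with $T(n')=T(n)$ and $\pi(n')\ge\pi(n)$, skip to the next iteration (state cut), and otherwise add $n$ to $\mathcal{V}$; finally add all children of $n$ to $\mathcal{F}$. *)

(* Defs.v *)
From mathcomp Require Import all_boot all_order all_algebra.
From mathcomp Require Import reals constructive_ereal.
Set Implicit Arguments. Unset Strict Implicit. Unset Printing Implicit Defensive.
Import Order.TTheory GRing.Theory Num.Theory.
Local Open Scope ring_scope.

Section LevinTS.
Variables (R : realType) (A : finType) (S : Type).
Variables (T : S -> A -> S) (s0 : S) (G : S -> Prop) (pi : seq A -> R).

(* Nodes are sequences of actions; the child of n by action a is rcons n a. *)
Definition reach (n : seq A) : S := foldl T s0 n.

Definition ell (n : seq A) : nat := (size n).+1.

Definition is_policy : Prop :=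
  [/\ pi [::] = 1,
      (forall n, 0 <= pi n <= 1) &
      (forall n, pi n = \sum_(a : A) pi (rcons n a))].

Definition cond_pi (a : A) (n : seq A) : R := pi (rcons n a) / pi n.

Definition markovian : Prop :=
  forall n1 n2 a, reach n1 = reach n2 -> 0 < pi n1 -> 0 < pi n2 ->
    cond_pi a n1 = cond_pi a n2.

Definition cost (n : seq A) : \bar R :=
  if pi n == 0 then +oo%E else ((ell n)%:R / pi n)%:E.

Definition children (n : seq A) : seq (seq A) := [seq rcons n a | a <- enum A].

Definition selectable (F : seq (seq A)) (n : seq A) : Prop :=
  n \in F /\ forall m, m \in F -> (cost n <= cost m)%E.

Definition levin_step (F V : seq (seq A)) (n : seq A) (F' V' : seq (seq A)) : Prop :=
  selectable F n /\ ~ G (reach n) /\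
  [\/ [/\ markovian,
          (exists2 n', n' \in V & reach n' = reach n /\ pi n <= pi n'),
          F' = rem n F & V' = V],
      [/\ markovian,
          ~ (exists2 n', n' \in V & reach n' = reach n /\ pi n <= pi n'),
          F' = rem n F ++ children n & V' = n :: V]
    | ~ markovian /\ F' = rem n F ++ children n /\ V' = V].

(* levin_run sel F V : a partial execution of LevinTS (with any tie-breaking)
   whose selected nodes so far are sel (none of them a goal), ending with
   frontier F and record set V. *)
Inductive levin_run : seq (seq A) -> seq (seq A) -> seq (seq A) -> Prop :=
| levin_run0 : levin_run [::] [:: [::]] [::]
| levin_runS sel F V n F' V' :
    levin_run sel F V -> levin_step F V n F' V' ->
    levin_run (rcons sel n) F' V'.

End LevinTS.

(* Main.v *)
Require Import Defs.
From mathcomp Require Import all_boot all_order all_algebra.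
From mathcomp Require Import reals constructive_ereal.
From mathcomp Require Import lra.
Import Order.TTheory GRing.Theory Num.Theory.
Local Open Scope ring_scope.
Set Implicit Arguments. Unset Strict Implicit.

Lemma pi_ge0 (R : realType) (A : finType) (pi : seq A -> R) :
  is_policy pi -> forall n, 0 <= pi n.
Proof. by case=> _ H _ n; case/andP: (H n). Qed.

Lemma pi_rcons_le (R : realType) (A : finType) (pi : seq A -> R) :
  is_policy pi -> forall n a, pi (rcons n a) <= pi n.
Proof.
move=> Hp n a; have H0 := pi_ge0 Hp; case: Hp => _ _ Hs.
rewrite [pi n]Hs (bigD1 a) //= lerDl sumr_ge0 // => b _.
Qed.

Lemma pi_cat_le (R : realType) (A : finType) (pi : seq A -> R) :
  is_policy pi -> forall n t, pi (n ++ t) <= pi n.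
Proof.
move=> Hp n; elim/last_ind => [|t a IH]; first by rewrite cats0.
by rewrite -rcons_cat; apply: le_trans (pi_rcons_le Hp _ _) IH.
Qed.

Lemma ell_cat (A : finType) (n t : seq A) : ell (n ++ t) = (ell n + size t)%N.
Proof. by rewrite /ell size_cat addSn. Qed.

Lemma cost_cat_le (R : realType) (A : finType) (pi : seq A -> R) :
  is_policy pi -> forall n t, (cost pi n <= cost pi (n ++ t))%E.
Proof.
move=> Hp n t; rewrite /cost.
case: (boolP (pi (n ++ t) == 0)) => H2; first by rewrite leey.
have H0 := pi_ge0 Hp.
have Pt : 0 < pi (n ++ t) by rewrite lt_def H0 andbT H2.
have Pn : 0 < pi n by apply: lt_le_trans Pt (pi_cat_le Hp _ _).
rewrite (gt_eqF Pn) lee_fin ell_cat natrD.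
rewrite ler_pdivrMr // mulrAC ler_pdivlMr //.
have := pi_cat_le Hp n t.
set x := pi n; set y := pi (n ++ t); set l := (ell n)%:R; set s := (size t)%:R.
have : 0 <= l by rewrite /l. have : 0 <= s by rewrite /s.
move=> Hs Hl Hxy.
have h1 : 0 <= l * (x - y) by apply: mulr_ge0 => //; rewrite subr_ge0.
have h2 : 0 <= s * x by apply: mulr_ge0 => //; apply: ltW.
nra.
Qed.
Lemma split_count (A : finType) (p : seq A) (M : seq (seq A)) :
  (forall m, m \in M -> prefix p m) ->
  (size M <= count (pred1 p) M + \sum_(a : A) count (prefix (rcons p a)) M)%N.
Proof.
elim: M => [|m M IH] HM /=; first by [].
have {IH} IH := IH (fun x Hx => HM x ltac:(by rewrite inE Hx orbT)).
rewrite big_split /=.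
have H1 : (1 <= (m == p) + \sum_(a : A) prefix (rcons p a) m)%N.
  have /prefixP [s ->] := HM m (mem_head _ _).
  case: s => [|a s]; first by rewrite cats0 eqxx.
  rewrite (bigD1 a) //=.
  have -> : prefix (rcons p a) (p ++ a :: s) by apply/prefixP; exists s; rewrite cat_rcons.
  by rewrite addnCA.
rewrite -add1n; apply: leq_trans (leq_add H1 IH) _.
by rewrite !addnA leq_add2r addnAC.
Qed.

Lemma aux_ineq (R : realType) (a b c d : R) : a <= 1 + b -> c + 1 <= d -> a + c <= b + d.
Proof. move=> *; lra. Qed.

Lemma count_bound (R : realType) (A : finType) (pi : seq A -> R) :
  is_policy pi -> forall (c : R), 0 <= c -> forall N p (M : seq (seq A)),
  (forall m, m \in M -> prefix p m /\ (size m < size p + N)%N) -> uniq M ->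
  (forall m, m \in M -> (ell m)%:R <= c * pi m) ->
  (size M)%:R + (M != [::])%:R * (size p)%:R <= c * pi p.
Proof.
move=> Hp c c0; have H0 := pi_ge0 Hp.
elim=> [|N IH] p M HM UM HC.
  case: M HM {UM HC} => [|m M'] HM; first by rewrite /= mul0r addr0 mulr_ge0.
  have [/prefixP [s Hs]] := HM m (mem_head _ _).
  by rewrite Hs size_cat addn0 ltnNge leq_addr.
case: M HM UM HC => [|m0 M0] HM UM HC; first by rewrite /= mul0r addr0 mulr_ge0.
set M := m0 :: M0.
pose Ma a := filter (prefix (rcons p a)) M.
have IHa a : (size (Ma a))%:R + ((Ma a) != [::])%:R * (size p).+1%:R <= c * pi (rcons p a).
  have -> : (size p).+1 = size (rcons p a) by rewrite size_rcons.
  apply: IH.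
  - move=> m; rewrite mem_filter => /andP [Hpre Hm]; split => //.
    by have [_] := HM m Hm; rewrite size_rcons addSnnS.
  - exact: filter_uniq.
  - by move=> m; rewrite mem_filter => /andP [_]; apply: HC.
have Hsum : \sum_a ((size (Ma a))%:R + ((Ma a) != [::])%:R * (size p).+1%:R) <= c * pi p.
  case: Hp => _ _ Hs; rewrite [pi p]Hs mulr_sumr; apply: ler_sum => a _; exact: IHa.
have Hsize := split_count (fun m Hm => (HM m Hm).1).
have Hcnt : (count (pred1 p) M <= 1)%N by rewrite count_uniq_mem // leq_b1.
rewrite /= mul1r.
case: (boolP [exists a, Ma a != [::]]) => Hex.
  have [a0 Ha0] := existsP Hex.
  have K1 : 1 <= \sum_a ((Ma a) != [::])%:R :> R.
    rewrite (bigD1 a0) //= Ha0 lerDl; apply: sumr_ge0 => a _; exact: ler0n.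
  move: Hsum; rewrite big_split /= -mulr_suml => Hsum.
  apply: le_trans Hsum.
  have Hs2n : (size M <= 1 + \sum_a size (Ma a))%N.
    apply: leq_trans Hsize _; apply: leq_add Hcnt _.
    by apply/eq_leq/eq_bigr => a _; rewrite size_filter.
  have Hs2 : (size M)%:R <= 1 + \sum_a (size (Ma a))%:R :> R.
    by move: Hs2n; rewrite -(ler_nat R) natrD natr_sum.
  have : (size p).+1%:R <= (\sum_a ((Ma a) != [::])%:R) * (size p).+1%:R :> R.
    by rewrite -[X in X <= _]mul1r; apply: ler_wpM2r.
  rewrite -natr1 => h; exact: aux_ineq Hs2 h.
have HMa a : Ma a = [::].
  by apply/eqP; apply: contraNT Hex => Hn; apply/existsP; exists a.
have E : (\sum_a count (prefix (rcons p a)) M = 0)%N.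
  by rewrite big1 // => a _; rewrite -size_filter -/(Ma a) HMa.
have Hsz : (size M <= 1)%N.
  by move: Hsize; rewrite -/M E addn0 => /leq_trans; apply.
have Hpin : p \in M.
  have : (0 < count (pred1 p) M)%N by move: Hsize; rewrite -/M E addn0 => H; apply: leq_trans H.
  by rewrite -has_count => /hasP [x Hx /eqP <-].
have := HC p Hpin; rewrite /ell.
move: Hsz; rewrite -(ler_nat R) => Hsz.
rewrite -natr1 => h; apply: le_trans h; rewrite addrC lerD2l; exact: Hsz.
Qed.

Definition dom (R : realType) (A : finType) (S : Type) (T : S -> A -> S) (s0 : S)
  (pi : seq A -> R) (x y : seq A) : Prop :=
  [/\ reach T s0 x = reach T s0 y, pi y <= pi x, (cost pi x <= cost pi y)%E &
      forall t, pi (x ++ t) * pi y = pi (y ++ t) * pi x].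

Lemma dom_refl (R : realType) (A : finType) (S : Type) (T : S -> A -> S) (s0 : S)
  (pi : seq A -> R) x : dom T s0 pi x x.
Proof. by split. Qed.

Lemma dom_trans (R : realType) (A : finType) (S : Type) (T : S -> A -> S) (s0 : S)
  (pi : seq A -> R) x y z : 0 < pi z ->
  dom T s0 pi x y -> dom T s0 pi y z -> dom T s0 pi x z.
Proof.
move=> Pz [r1 p1 c1 E1] [r2 p2 c2 E2]; split.
- by rewrite r1.
- exact: le_trans p2 p1.
- exact: le_trans c1 c2.
move=> t.
have Py : pi y != 0 by rewrite gt_eqF // (lt_le_trans Pz p2).
apply/(mulIf Py).
by rewrite mulrAC E1 -mulrA [pi x * pi z]mulrC mulrA E2 mulrAC.
Qed.

Lemma reach_cat (A : finType) (S : Type) (T : S -> A -> S) (s0 : S) x y t :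
  reach T s0 x = reach T s0 y -> reach T s0 (x ++ t) = reach T s0 (y ++ t).
Proof. by rewrite /reach !foldl_cat => ->. Qed.

Lemma dom_ext (R : realType) (A : finType) (S : Type) (T : S -> A -> S) (s0 : S)
  (pi : seq A -> R) : is_policy pi -> forall x y t, 0 < pi (y ++ t) ->
  dom T s0 pi x y -> dom T s0 pi (x ++ t) (y ++ t).
Proof.
move=> Hp x y t Q0 [r1 p1 c1 E1].
have H0 := pi_ge0 Hp.
have Y0 : 0 < pi y by apply: lt_le_trans Q0 (pi_cat_le Hp _ _).
have X0 : 0 < pi x by apply: lt_le_trans Y0 p1.
have Et := E1 t.
have PQ : pi (y ++ t) <= pi (x ++ t).
  by rewrite -(ler_pM2r Y0) Et ler_wpM2l // ltW.
have P0 : 0 < pi (x ++ t) by apply: lt_le_trans Q0 PQ.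
split.
- exact: reach_cat.
- exact: PQ.
- move: c1; rewrite /cost (gt_eqF X0) (gt_eqF Y0) (gt_eqF P0) (gt_eqF Q0) !lee_fin.
  rewrite !ell_cat !natrD.
  set lx := (ell x)%:R; set ly := (ell y)%:R; set s := (size t)%:R.
  set X := pi x; set Y := pi y; set P := pi (x ++ t); set Q := pi (y ++ t).
  move: Et; rewrite -/X -/Y -/P -/Q => Et.
  have s0' : 0 <= s by rewrite /s.
  rewrite ler_pdivrMr // mulrAC ler_pdivlMr // => h1.
  rewrite ler_pdivrMr // mulrAC ler_pdivlMr //.
  have h2 : s * Y <= s * X by apply: ler_wpM2l.
  have h3 : (lx + s) * Y <= (ly + s) * X by rewrite !mulrDl; apply: lerD.
  rewrite -(ler_pM2r X0) -!mulrA -Et [P * Y]mulrC [P * X]mulrC !mulrA ler_pM2r //.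
move=> u; rewrite -!catA.
have Py : pi y != 0 by rewrite gt_eqF.
apply/(mulIf Py).
by rewrite mulrAC E1 -mulrA [pi x * _]mulrC -Et mulrA.
Qed.

Lemma markov_prop (R : realType) (A : finType) (S : Type) (T : S -> A -> S) (s0 : S)
  (pi : seq A -> R) : is_policy pi -> markovian T s0 pi ->
  forall n' n, reach T s0 n' = reach T s0 n -> 0 < pi n -> pi n <= pi n' ->
  forall t, pi (n' ++ t) * pi n = pi (n ++ t) * pi n'.
Proof.
move=> Hp Hm n' n Hr Pn Pnn'.
have H0 := pi_ge0 Hp.
have Pn' : 0 < pi n' by apply: lt_le_trans Pn Pnn'.
elim/last_ind => [|t a IH]; first by rewrite !cats0 mulrC.
rewrite -!rcons_cat.
case: (boolP (pi (n ++ t) == 0)) => Z.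
  have Z' : pi (n' ++ t) = 0.
    by move: IH; rewrite (eqP Z) mul0r => /eqP; rewrite mulf_eq0 (gt_eqF Pn) orbF => /eqP.
  have Za : pi (rcons (n ++ t) a) = 0.
    by apply/eqP; rewrite eq_le H0 andbT -(eqP Z) pi_rcons_le.
  have Za' : pi (rcons (n' ++ t) a) = 0.
    by apply/eqP; rewrite eq_le H0 andbT -Z' pi_rcons_le.
  by rewrite Za Za' !mul0r.
have Pt : 0 < pi (n ++ t) by rewrite lt_def Z H0.
have Pt' : 0 < pi (n' ++ t).
  rewrite lt_def H0 andbT; apply/eqP => Z'.
  by move: IH; rewrite Z' mul0r => /esym/eqP; rewrite mulf_eq0 (gt_eqF Pt) (gt_eqF Pn').
have Hc := Hm (n' ++ t) (n ++ t) a (reach_cat t Hr) Pt' Pt.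
move: Hc; rewrite /cond_pi => Hc.
have -> : pi (rcons (n' ++ t) a) = pi (rcons (n' ++ t) a) / pi (n' ++ t) * pi (n' ++ t).
  by rewrite divfK // gt_eqF.
have -> : pi (rcons (n ++ t) a) = pi (rcons (n ++ t) a) / pi (n ++ t) * pi (n ++ t).
  by rewrite divfK // gt_eqF.
by rewrite Hc -!mulrA IH.
Qed.

Definition inv (R : realType) (A : finType) (S : Type) (T : S -> A -> S) (s0 : S)
  (G : S -> Prop) (pi : seq A -> R) (sel F V : seq (seq A)) : Prop :=
 [/\ uniq (sel ++ F), [::] \in sel ++ F,
   (forall x y, x \in sel -> y \in F -> (cost pi x <= cost pi y)%E)
 & (forall x, x \in sel -> ~ G (reach T s0 x))] /\
 [/\ (forall v, v \in V -> v \in sel),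
   (forall y, y \in sel ++ F -> y != [::] -> exists2 p, p \in sel & exists a, y = rcons p a)
 & (forall i, (i < size sel)%N ->
     (forall a, rcons (nth [::] sel i) a \in sel ++ F) \/
     (markovian T s0 pi /\ exists2 j, (j < i)%N &
        [/\ reach T s0 (nth [::] sel j) = reach T s0 (nth [::] sel i),
            pi (nth [::] sel i) <= pi (nth [::] sel j) &
            (cost pi (nth [::] sel j) <= cost pi (nth [::] sel i))%E]))].

Lemma inv_step (R : realType) (A : finType) (S : Type) (T : S -> A -> S) (s0 : S)
  (G : S -> Prop) (pi : seq A -> R) : is_policy pi ->
  forall sel F V n F' V', inv T s0 G pi sel F V -> levin_step T s0 G pi F V n F' V' ->
  inv T s0 G pi (rcons sel n) F' V'.
Proof.
move=> Hp sel F V n F' V' [[U Root Cost NG] [VS Par Ex]] [[nF Hmin] [nG Hcase]].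
have Pm : perm_eq (sel ++ F) (rcons sel n ++ rem n F).
  by rewrite cat_rcons perm_cat2l perm_to_rem.
have Memb x : (x \in rcons sel n ++ rem n F) = (x \in sel ++ F) by rewrite (perm_mem Pm).
have U1 : uniq (rcons sel n ++ rem n F) by rewrite -(perm_uniq Pm).
have nsel : n \notin sel.
  by move: U; rewrite cat_uniq => /and3P [_ /hasPn Hd _]; apply: Hd.
have cost_ch a : (cost pi n <= cost pi (rcons n a))%E by rewrite -cats1 cost_cat_le.
have rnil (p : seq A) (a : A) : rcons p a != [::] by rewrite -size_eq0 size_rcons.
have selS x : x \in sel -> x \in rcons sel n by rewrite mem_rcons inE => ->; rewrite orbT.
have Hcase' : (F' = rem n F /\ V' = V /\ markovian T s0 pi /\
    exists2 n', n' \in V & reach T s0 n' = reach T s0 n /\ pi n <= pi n') \/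
    (F' = rem n F ++ children n /\ (V' = n :: V \/ V' = V)).
  case: Hcase => [[Hm Hex -> ->]|[Hm Hex -> ->]|[Hm [-> ->]]].
  - by left.
  - by right; split => //; left.
  - by right; split => //; right.
case: Hcase' => [[-> [-> [Hm [n' n'V [Hr Hpn]]]]]|[-> HV']].
  split; split.
  - exact: U1.
  - by rewrite Memb.
  - move=> x y; rewrite mem_rcons inE => /orP [/eqP -> | xs] /mem_rem yF.
      exact: Hmin.
    exact: Cost.
  - by move=> x; rewrite mem_rcons inE => /orP [/eqP -> | xs] //; apply: NG.
  - by move=> v /VS /selS.
  - move=> y; rewrite Memb => yA yn; have [p ps Hy] := Par y yA yn.
    by exists p => //; apply: selS.
  - move=> i; rewrite size_rcons ltnS leq_eqVlt => /orP [/eqP Ei | Hi].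
      right; split => //.
      have n's : n' \in sel by apply: VS.
      exists (index n' sel); first by rewrite Ei index_mem.
      rewrite !nth_rcons index_mem n's Ei ltnn eqxx nth_index //.
      by split => //; apply: Cost.
    rewrite !nth_rcons Hi.
    case: (Ex i Hi) => [Hl|[Hm' [j Hj Hc]]].
      by left => a; rewrite Memb.
    right; split => //; exists j => //.
    by rewrite nth_rcons (ltn_trans Hj Hi).
have Memc y : (y \in children n) -> exists a, y = rcons n a.
  by move/mapP => [a _ ->]; exists a.
have chin a : rcons n a \in children n by apply/mapP; exists a => //; rewrite mem_enum.
have Memb2 x : (x \in rcons sel n ++ (rem n F ++ children n)) =
               (x \in sel ++ F) || (x \in children n).
  by rewrite catA mem_cat Memb.
split; split.
- rewrite catA cat_uniq U1 /=; apply/andP; split.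
    apply/hasPn => y /Memc [a ->]; rewrite Memb; apply/negP => Hin.
    have [p ps [b /rcons_inj [Hpn _]]] := Par _ Hin (rnil _ _).
    by move: nsel; rewrite Hpn ps.
  rewrite map_inj_uniq ?enum_uniq //.
  by move=> a b /rcons_inj [].
- by rewrite Memb2 Root.
- move=> x y; rewrite mem_rcons inE => /orP [/eqP -> | xs]; rewrite mem_cat => /orP [/mem_rem yF | /Memc [a ->]].
  + exact: Hmin.
  + exact: cost_ch.
  + exact: Cost.
  + exact: le_trans (Cost _ _ xs nF) (cost_ch a).
- by move=> x; rewrite mem_rcons inE => /orP [/eqP -> | xs] //; apply: NG.
- case: HV' => -> v; last by move/VS/selS.
  by rewrite inE => /orP [/eqP -> | /VS /selS] //; rewrite mem_rcons mem_head.
- move=> y; rewrite Memb2 => /orP [yA | /Memc [a ->]] yn.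
    by have [p ps Hy] := Par y yA yn; exists p => //; apply: selS.
  by exists n; [rewrite mem_rcons mem_head | exists a].
- move=> i; rewrite size_rcons ltnS leq_eqVlt => /orP [/eqP Ei | Hi].
    left => a; rewrite nth_rcons Ei ltnn eqxx Memb2 chin; exact: orbT.
  rewrite !nth_rcons Hi.
  case: (Ex i Hi) => [Hl|[Hm' [j Hj Hc]]].
    by left => a; rewrite Memb2 Hl.
  right; split => //; exists j => //.
  by rewrite nth_rcons (ltn_trans Hj Hi).
Qed.

Lemma inv_run (R : realType) (A : finType) (S : Type) (T : S -> A -> S) (s0 : S)
  (G : S -> Prop) (pi : seq A -> R) : is_policy pi ->
  forall sel F V, levin_run T s0 G pi sel F V -> inv T s0 G pi sel F V.
Proof.
move=> Hp sel F V; elim => [|sel0 F0 V0 n F1 V1 _ IH Hs].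
  split; split => //.
  by move=> y; rewrite inE => /eqP ->; rewrite eqxx.
exact: inv_step Hp _ _ _ _ _ _ IH Hs.
Qed.

Lemma claim (R : realType) (A : finType) (S : Type) (T : S -> A -> S) (s0 : S)
  (G : S -> Prop) (pi : seq A -> R) : is_policy pi ->
  forall sel F V, inv T s0 G pi sel F V ->
  forall N s, (size s < N)%N -> forall i, (i < size (sel ++ F))%N ->
  G (reach T s0 (nth [::] (sel ++ F) i ++ s)) -> 0 < pi (nth [::] (sel ++ F) i ++ s) ->
  exists k, exists t, k \in F /\ dom T s0 pi (k ++ t) (nth [::] (sel ++ F) i ++ s).
Proof.
move=> Hp sel F V [[U Root Cost NG] [VS Par Ex]].
have H0 := pi_ge0 Hp.
elim=> [//|N IHN] s Hs i; elim/ltn_ind: i => i IHi Hi HG Hpos.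
rewrite nth_cat in HG Hpos *.
case: ltnP => Hisel; last first.
  exists (nth [::] F (i - size sel)), s; split; last exact: dom_refl.
  by apply: mem_nth; rewrite -(ltn_add2l (size sel)) subnKC // -size_cat.
rewrite Hisel in HG Hpos.
set v := nth [::] sel i in HG Hpos *.
have vsel : v \in sel by apply: mem_nth.
case: s Hs HG Hpos IHi => [|a s'] Hs HG Hpos IHi.
  by move: HG; rewrite cats0 => /(NG _ vsel).
case: (Ex i Hisel) => [Hl | [Hm [j Hj [Hr Hpv Hc]]]].
  have Hin := Hl a.
  have Hi' : (index (rcons v a) (sel ++ F) < size (sel ++ F))%N by rewrite index_mem.
  have E : nth [::] (sel ++ F) (index (rcons v a) (sel ++ F)) ++ s' = v ++ a :: s'.
    by rewrite nth_index // cat_rcons.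
  have := IHN s' Hs _ Hi'; rewrite E => /(_ HG Hpos); exact.
have Hj' : (j < size (sel ++ F))%N by rewrite size_cat (ltn_trans Hj) // ltn_addr.
have Ej : nth [::] (sel ++ F) j = nth [::] sel j by rewrite nth_cat (ltn_trans Hj Hisel).
have Pv : 0 < pi v by apply: lt_le_trans Hpos (pi_cat_le Hp _ _).
have D : dom T s0 pi (nth [::] sel j) v.
  split => //; apply: (markov_prop (n' := nth [::] sel j) (n := v) Hp Hm) => //.
have D2 := dom_ext Hp Hpos D.
case: D2 => [Hr2 Hp2 Hc2 E2].
have HG' : G (reach T s0 (nth [::] (sel ++ F) j ++ a :: s')) by rewrite Ej Hr2.
have := lt_le_trans Hpos Hp2; rewrite -Ej => Hpos'.
have [k [t [kF Dk]]] := IHi j Hj Hj' HG' Hpos'.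
move: Dk; rewrite Ej => Dk.
exists k, t; split => //.
exact: dom_trans Hpos Dk (dom_ext Hp Hpos D).
Qed.

Unset Implicit Arguments.
Set Strict Implicit.

Theorem theorem3 (R : realType) (A : finType) (S : Type)
  (T : S -> A -> S) (s0 : S) (G : S -> Prop) (pi : seq A -> R) :
  is_policy pi ->
  forall (sel F V : seq (seq A)),
    levin_run T s0 G pi sel F V ->
    forall g : seq A, G (reach T s0 g) ->
      (((size sel).+1)%:R%:E <= cost pi g)%E /\
      ((cost pi g < +oo)%E -> F != [::]).
Proof.
move=> Hp sel F V Hrun g Hg.
have I := inv_run Hp Hrun.
have H0 := pi_ge0 Hp.
case: (boolP (pi g == 0)) => Hz.
  have -> : cost pi g = (+oo)%E by rewrite /cost Hz.
  by split; [rewrite leey | rewrite ltxx].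
have Pg : 0 < pi g by rewrite lt_def Hz H0.
have Ecost : cost pi g = ((ell g)%:R / pi g)%:E by rewrite /cost (negbTE Hz).
have I' := I; case: I' => [[U Root Cost NG] _].
have Hi : (index [::] (sel ++ F) < size (sel ++ F))%N by rewrite index_mem.
have Enth : nth [::] (sel ++ F) (index [::] (sel ++ F)) ++ g = g by rewrite nth_index.
have HG' : G (reach T s0 (nth [::] (sel ++ F) (index [::] (sel ++ F)) ++ g)) by rewrite Enth.
have Pg' : 0 < pi (nth [::] (sel ++ F) (index [::] (sel ++ F)) ++ g) by rewrite Enth.
have [k [t [kF D]]] := claim Hp I (ltnSn (size g)) Hi HG' Pg'.
move: D; rewrite Enth => -[_ _ Hck _].
have Ck : (cost pi k <= cost pi g)%E := le_trans (cost_cat_le Hp k t) Hck.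
split; last by move=> _; apply/eqP => HF; rewrite HF in kF.
set c := (ell g)%:R / pi g.
have c0 : 0 <= c by rewrite divr_ge0.
set M := rcons sel k.
have ksel : k \notin sel.
  by move: U; rewrite cat_uniq => /and3P [_ /hasPn Hd _]; apply: Hd.
have UM : uniq M by rewrite rcons_uniq ksel; move: U; rewrite cat_uniq => /and3P [].
have HC m : m \in M -> (ell m)%:R <= c * pi m.
  move=> Hm.
  have Cm : (cost pi m <= cost pi g)%E.
    move: Hm; rewrite mem_rcons inE => /orP [/eqP -> // | ms].
    exact: le_trans (Cost m k ms kF) Ck.
  move: Cm; rewrite Ecost /cost; case: (boolP (pi m == 0)) => Hm0.
    by rewrite leye_eq.
  have Pm : 0 < pi m by rewrite lt_def Hm0 H0.
  by rewrite lee_fin ler_pdivrMr.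
have HM m : m \in M -> prefix [::] m /\ (size m < size ([::] : seq A) + (\sum_(x <- M) size x).+1)%N.
  move=> Hm; split; first by apply/prefixP; exists m.
  by rewrite add0n ltnS (bigD1_seq m Hm UM) /= leq_addr.
have := count_bound Hp c0 HM UM HC.
case: Hp => P1 _ _.
rewrite /= mulr0 addr0 P1 mulr1 size_rcons Ecost lee_fin; exact.
Qed.
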